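(* Let $(A,G)$ be an admissible pair with $A\in M_{Q_0}(\mathbb Z)$ skew-symmetrizable. Then the quotient matrix $A/G$ is skew-symmetrizable.
   Context: $Q_0$ is a finite set. A matrix $B\in M_{Q_0}(\mathbb Z)$ is skew-symmetrizable if there is a diagonal integer matrix $D$ with non-negative (positive) diagonal entries such that $DB$ is skew-symmetric. An automorphism of $A=(a_{ij})$ is a permutation $g$ of $Q_0$ with $a_{gi,gj}=a_{ij}$ for all $i,j$; a group $G$ of such permutations is an automorphism group of $A$; it is admissible (and $(A,G)$ an admissible pair) if for distinct $i,j$ in the same $G$-orbit there is no path of length $1$ or $2$ from $i$ to $j$ in the valued quiver of $A$ (i.e. $a_{ij}\le0$ and no $k$ with $a_{ik}>0$, $a_{kj}>0$). With $\overline Q_0$ the set of $G$-orbits, the quotient matrix $A/G\in M_{\overline Q_0}(\mathbb Z)$ has entries $(A/G)_{\mathbf i,\mathbf j}=\sum_{k\in\mathbf i}a_{k,j}$ for any $j\in\mathbf j$. *)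

(* Defs.v *)
From HB Require Import structures.
From mathcomp Require Import all_boot all_order all_algebra all_fingroup.
Set Implicit Arguments. Unset Strict Implicit. Unset Printing Implicit Defensive.
Import Order.TTheory GRing.Theory Num.Theory.
Local Open Scope ring_scope.

Definition qmatrix (Q0 : finType) := Q0 -> Q0 -> int.

Definition skew_symmetrizable (Q0 : finType) (B : qmatrix Q0) : Prop :=
  exists d : Q0 -> int, (forall i, 0 < d i) /\
    (forall i j, d i * B i j = - (d j * B j i)).

Definition is_aut_group (Q0 : finType) (A : qmatrix Q0) (G : {group {perm Q0}}) :=
  forall g, g \in G -> forall i j, A (g i) (g j) = A i j.

Definition orbits (Q0 : finType) (G : {group {perm Q0}}) : {set {set Q0}} :=
  [set orbit 'P G x | x : Q0].

(* admissible: no path of length 1 or 2 between distinct vertices of an orbit *)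
Definition admissible (Q0 : finType) (A : qmatrix Q0) (G : {group {perm Q0}}) :=
  is_aut_group A G /\
  forall i j, j \in orbit 'P G i -> i != j ->
    A i j <= 0 /\ forall k, ~~ ((0 < A i k) && (0 < A k j)).

Definition orbit_type (Q0 : finType) (G : {group {perm Q0}}) :=
  {O : {set Q0} | O \in orbits G}.

Definition quotient_matrix (Q0 : finType) (A : qmatrix Q0) (G : {group {perm Q0}})
  : qmatrix (orbit_type G) :=
  fun I J => if [pick j in val J] is Some j then \sum_(k in val I) A k j else 0.
Arguments quotient_matrix {Q0} A G _ _.
Arguments orbit_type {Q0} G.

(* Main.v *)
Require Import Defs.
From mathcomp Require Import all_boot all_order all_algebra all_fingroup.
Set Implicit Arguments. Unset Strict Implicit. Unset Printing Implicit Defensive.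
Import Order.TTheory GRing.Theory Num.Theory.
Local Open Scope ring_scope.

Section S.
Variables (Q0 : finType) (A : qmatrix Q0) (G : {group {perm Q0}}).
Hypothesis autA : is_aut_group A G.
Variable d : Q0 -> int.
Hypothesis dpos : forall i, 0 < d i.
Hypothesis dA : forall i j, d i * A i j = - (d j * A j i).

Let e i := \sum_(h in G) d (h i).

Lemma e_pos i : 0 < e i.
Proof.
rewrite /e (bigD1 (1%g:{perm Q0})) ?group1 //= ltr_wpDr //; first by apply: sumr_ge0 => h _; apply: ltW.
Qed.

Lemma eA i j : e i * A i j = - (e j * A j i).
Proof.
rewrite /e !mulr_suml -sumrN; apply: eq_bigr => h hG.
by rewrite -(autA hG i j) -(autA hG j i) dA.
Qed.

Lemma e_inv g i : g \in G -> e (g i) = e i.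
Proof.
move=> gG; rewrite /e [RHS](reindex_inj (mulgI g)) /=.
by apply: eq_big => [h|h _]; [rewrite groupMl | rewrite permM].
Qed.

Lemma e_orb i k : k \in orbit 'P G i -> e k = e i.
Proof. by case/orbitP => g gG <-; exact: e_inv. Qed.

Lemma S_inv x j g : g \in G ->
  \sum_(k in orbit 'P G x) A k (g j) = \sum_(k in orbit 'P G x) A k j.
Proof.
move=> gG; rewrite (reindex_acts 'P (acts_orbit 'P x (subsetT G)) gG).
by apply: eq_bigr => k _; rewrite /= autA.
Qed.

Lemma S_orb x j j' : j' \in orbit 'P G j ->
  \sum_(k in orbit 'P G x) A k j' = \sum_(k in orbit 'P G x) A k j.
Proof. by case/orbitP => g gG <-; exact: S_inv. Qed.

Lemma key x y :
  e x * (#|orbit 'P G y|%:R * \sum_(k in orbit 'P G x) A k y) =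
  - (e y * (#|orbit 'P G x|%:R * \sum_(k in orbit 'P G y) A k x)).
Proof.
have E z w : #|orbit 'P G w|%:R * \sum_(k in orbit 'P G z) A k w =
   \sum_(j in orbit 'P G w) \sum_(k in orbit 'P G z) A k j.
  rewrite mulr_natl -sumr_const; apply: eq_bigr => j jw; rewrite (S_orb z (j:=w) (j':=j)) //.
rewrite !E !mulr_sumr -sumrN.
under eq_bigr do rewrite mulr_sumr.
rewrite exchange_big /=; apply: eq_bigr => k kx.
rewrite mulr_sumr -sumrN; apply: eq_bigr => j jy.
by rewrite -(e_orb jy) -(e_orb kx) eA.
Qed.

End S.

From mathcomp Require Import ring.

Theorem mainTheorem7 (Q0 : finType) (A : qmatrix Q0) (G : {group {perm Q0}}) :
  admissible A G -> skew_symmetrizable A ->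
  skew_symmetrizable (quotient_matrix A G).
Proof.
move=> [autA _] [d [dpos dA]].
have rep : forall I : orbit_type G,
    exists2 i, [pick j in val I] = Some i & val I = orbit 'P G i.
  move=> [O HO] /=; case/imsetP: HO => x _ ->.
  case: pickP => [i iO|/(_ x)]; last by rewrite orbit_refl.
  by exists i => //; apply/esym/orbit_eqP.
pose P (I : orbit_type G) := (\prod_(K | K != I) #|val K|)%N.
pose Pt := (\prod_(K : orbit_type G) #|val K|)%N.
have PI (I : orbit_type G) : (#|val I| * P I)%N = Pt by rewrite /Pt (bigD1 I).
have Pgt0 (I : orbit_type G) : (0 < P I)%N.
  apply: prodn_gt0 => K; case: (rep K) => k _ ->.
  by apply/card_gt0P; exists k; rewrite orbit_refl.
exists (fun I : orbit_type G => (if [pick j in val I] is Some i then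
          \sum_(h in G) d (h i) else 1) * (P I)%:R).
split.
  move=> I; case: (rep I) => i -> _.
  by rewrite pmulr_rgt0 ?(e_pos G dpos) // ltr0n.
move=> I J /=.
case: (rep I) => i pI eI; case: (rep J) => j pJ eJ.
have hI : (#|orbit 'P G i|%:R * (P I)%:R : int) = Pt%:R by rewrite -natrM -eI PI.
have hJ : (#|orbit 'P G j|%:R * (P J)%:R : int) = Pt%:R by rewrite -natrM -eJ PI.
rewrite /quotient_matrix pI pJ eI eJ.
have nz : (#|orbit 'P G i|%:R * #|orbit 'P G j|%:R : int) != 0.
  by rewrite mulf_eq0 !pnatr_eq0 negb_or -!lt0n !card_gt0;
     apply/andP; split; apply/set0Pn; [exists i|exists j]; rewrite orbit_refl.
apply: (mulIf nz).
have K := key autA dA i j.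
set ei := \sum_(h in G) d (h i) in K *.
set ej := \sum_(h in G) d (h j) in K *.
set S1 := \sum_(k in orbit 'P G i) A k j in K *.
set S2 := \sum_(k in orbit 'P G j) A k i in K *.
set nI := #|orbit 'P G i|%:R in K hI nz *.
set nJ := #|orbit 'P G j|%:R in K hJ nz *.
transitivity ((Pt%:R : int) * (ei * (nJ * S1))); first by rewrite -hI; ring.
by rewrite K -hJ; ring.
Qed.
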